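(* Let $M$ be a connected, oriented, complete hyperbolic three-manifold with universal cover $\tilde M\cong\mathbb{H}^3$, let $\omega$ be a closed one-form on $M$ with lift $\tilde\omega$ to $\tilde M$, and let $b\in\tilde M$. Let $D$ be an ideal view, i.e. the set of outward unit normals to a horosphere $H\subset\tilde M$ (pointing away from the ideal centre of $H$). Identify $H=\pi(D)$ isometrically with $\mathbb{C}$ and write $z_D\in D$ for the normal vector based at the point corresponding to $z\in\mathbb{C}$. Let $d$ be a real number and let $E=\varphi_d(D)$ (again an ideal view), with $\pi(E)$ identified isometrically with $\mathbb{C}$ so that $\varphi_d(z_D)=(e^dz)_E$ for all $z\in\mathbb{C}$. Then for every $R>0$ and every $z\in\mathbb{C}$, \[\Phi^{\omega,b,D}_{R+d}(z_D)=\Phi^{\omega,b,E}_R\big((e^dz)_E\big).\]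
   Context: $\pi\colon \mathrm{UT}\tilde M\to\tilde M$ is the unit tangent bundle projection and $\varphi_t$ is the geodesic flow on $\mathrm{UT}\tilde M$. For a view $D\subset\mathrm{UT}\tilde M$, basepoint $b\in\tilde M$ and $T>0$, the cohomology fractal is $\Phi^{\omega,b,D}_T\colon D\to\mathbb{R}$, $\Phi^{\omega,b,D}_T(v)=\int_0^T\tilde\omega(\varphi_t(v))\,dt+\int_b^{\pi(v)}\tilde\omega$, where a one-form is evaluated on a unit vector $v$ at its basepoint, and the second integral is along any path in $\tilde M$ (well defined since $\tilde\omega$ is closed on the simply connected $\tilde M$). Equivalently $\Phi^{\omega,b,D}_T(v)=W(\pi(\varphi_T(v)))$ where $dW=\tilde\omega$ and $W(b)=0$. *)

(* Defs.v *)
(* Hyperboloid model of H^3 inside Minkowski R^{1,3}. *)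
From Stdlib Require Import Reals Lra.
From Coquelicot Require Import Coquelicot.
Open Scope R_scope.

Record R4 := mk4 { c0 : R; c1 : R; c2 : R; c3 : R }.

Definition add4 (a b : R4) : R4 :=
  mk4 (c0 a + c0 b) (c1 a + c1 b) (c2 a + c2 b) (c3 a + c3 b).
Definition scal4 (k : R) (a : R4) : R4 := mk4 (k * c0 a) (k * c1 a) (k * c2 a) (k * c3 a).
Definition sub4 (a b : R4) : R4 := add4 a (scal4 (-1) b).

Definition mink (a b : R4) : R :=
  - c0 a * c0 b + c1 a * c1 b + c2 a * c2 b + c3 a * c3 b.

Definition inH3 (x : R4) : Prop := mink x x = -1 /\ 0 < c0 x.

(* Unit tangent bundle UT H^3: pairs (x,v), x in H^3, v in T_x H^3 = x^perp, <v,v> = 1. *)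
Definition UT := (R4 * R4)%type.
Definition inUT (u : UT) : Prop :=
  inH3 (fst u) /\ mink (fst u) (snd u) = 0 /\ mink (snd u) (snd u) = 1.

Definition proj (u : UT) : R4 := fst u.

Definition geoflow (t : R) (u : UT) : UT :=
  (add4 (scal4 (cosh t) (fst u)) (scal4 (sinh t) (snd u)),
   add4 (scal4 (sinh t) (fst u)) (scal4 (cosh t) (snd u))).

(* Global chart of H^3:  x |-> (x1,x2,x3) in R^3 (inverse y |-> (sqrt(1+|y|^2), y)). *)
Definition R3 := (R * R * R)%type.
Definition chart (x : R4) : R3 := (c1 x, c2 x, c3 x).

Definition add3 (p q : R3) : R3 :=
  let '(a1, a2, a3) := p in let '(b1, b2, b3) := q in (a1 + b1, a2 + b2, a3 + b3).
Definition scal3 (k : R) (p : R3) : R3 :=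
  let '(a1, a2, a3) := p in (k * a1, k * a2, k * a3).
Definition dot3 (p q : R3) : R :=
  let '(a1, a2, a3) := p in let '(b1, b2, b3) := q in a1 * b1 + a2 * b2 + a3 * b3.
Definition e3 (i : nat) : R3 :=
  match i with 0%nat => (1, 0, 0) | 1%nat => (0, 1, 0) | _ => (0, 0, 1) end.

Definition partial3 (i : nat) (f : R3 -> R) (p : R3) : R :=
  Derive (fun s => f (add3 p (scal3 s (e3 i)))) 0.

Fixpoint Ck3 (k : nat) (f : R3 -> R) : Prop :=
  match k with
  | O => forall p, continuous f p
  | S k' => (forall p, continuous f p) /\
            forall i, (i < 3)%nat ->
              (forall p, ex_derive (fun s => f (add3 p (scal3 s (e3 i)))) 0) /\
              Ck3 k' (partial3 i f)
  end.
Definition smooth3 (f : R3 -> R) : Prop := forall k, Ck3 k f.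

(* A one-form on H^3, in the global chart: alpha = a1 dy1 + a2 dy2 + a3 dy3. *)
Definition oneform := ((R3 -> R) * (R3 -> R) * (R3 -> R))%type.
Definition ofcomp (a : oneform) (i : nat) : R3 -> R :=
  let '(a1, a2, a3) := a in match i with 0%nat => a1 | 1%nat => a2 | _ => a3 end.
Definition ofval (a : oneform) (p : R3) : R3 :=
  (ofcomp a 0 p, ofcomp a 1 p, ofcomp a 2 p).

Definition closed_oneform (a : oneform) : Prop :=
  (forall i, (i < 3)%nat -> smooth3 (ofcomp a i)) /\
  forall i j, (i < 3)%nat -> (j < 3)%nat -> forall p,
    partial3 i (ofcomp a j) p = partial3 j (ofcomp a i) p.

(* evaluation of a one-form on a (unit) tangent vector at its basepoint:
   the tangent vector v at x pushes forward under the chart to (v1,v2,v3). *)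
Definition eval_form (a : oneform) (u : UT) : R :=
  dot3 (ofval a (chart (fst u))) (chart (snd u)).

(* int_b^x omega~, along the path that is a straight segment in the chart
   (path-independent, as omega~ is closed on simply connected H^3). *)
Definition path_int (a : oneform) (b x : R4) : R :=
  RInt (fun s => dot3 (ofval a (add3 (chart b) (scal3 s (add3 (chart x) (scal3 (-1) (chart b))))))
                      (add3 (chart x) (scal3 (-1) (chart b)))) 0 1.

(* cohomology fractal Phi^{omega,b,D}_T(v); it does not depend on D except as domain. *)
Definition cohom_fractal (a : oneform) (b : R4) (T : R) (u : UT) : R :=
  RInt (fun t => eval_form a (geoflow t u)) 0 T + path_int a b (proj u).

(* Ideal points = future light-like rays; a horosphere is {x in H^3 | <x,l> = -1}
   for a (unique) future null vector l; its ideal centre is the ray of l. *)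
Definition future_null (l : R4) : Prop := mink l l = 0 /\ 0 < c0 l.
Definition horosphere (l : R4) (x : R4) : Prop := inH3 x /\ mink x l = -1.

(* The ideal view D: outward unit normals to the horosphere, pointing away from
   the ideal centre, i.e. v in T_x H^3, <v,v>=1, v orthogonal to T_x H
   (= {w | <w,x> = 0, <w,l> = 0}), and -<x,l> (= e^{-dist to centre} up to
   a constant) increasing in direction v. *)
Definition ideal_view (l : R4) (u : UT) : Prop :=
  horosphere l (fst u) /\ inUT u /\
  (forall w, mink w (fst u) = 0 -> mink w l = 0 -> mink (snd u) w = 0) /\
  mink (snd u) l < 0.

(* the normal vector of the ideal view of l based at x (this is x - l) *)
Definition horo_normal (l x : R4) : UT := (x, sub4 x l).

(* an isometric identification of C with the horosphere of l:
   a smooth bijection iota : C -> H whose differential carries the standard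
   orthonormal frame of C = R^2 to an orthonormal frame (for the induced metric) *)
Definition comp4 (i : nat) (x : R4) : R :=
  match i with 0%nat => c0 x | 1%nat => c1 x | 2%nat => c2 x | _ => c3 x end.

Fixpoint Ck2 (k : nat) (f : C -> R) : Prop :=
  match k with
  | O => forall p, continuous f p
  | S k' => (forall p, continuous f p) /\
      (forall p : C, ex_derive (fun s => f (fst p + s, snd p)) 0) /\
      (forall p : C, ex_derive (fun s => f (fst p, snd p + s)) 0) /\
      Ck2 k' (fun p => Derive (fun s => f (fst p + s, snd p)) 0) /\
      Ck2 k' (fun p => Derive (fun s => f (fst p, snd p + s)) 0)
  end.

Definition dre (iota : C -> R4) (z : C) : R4 :=
  mk4 (Derive (fun s => c0 (iota (fst z + s, snd z))) 0)
      (Derive (fun s => c1 (iota (fst z + s, snd z))) 0)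
      (Derive (fun s => c2 (iota (fst z + s, snd z))) 0)
      (Derive (fun s => c3 (iota (fst z + s, snd z))) 0).
Definition dim (iota : C -> R4) (z : C) : R4 :=
  mk4 (Derive (fun s => c0 (iota (fst z, snd z + s))) 0)
      (Derive (fun s => c1 (iota (fst z, snd z + s))) 0)
      (Derive (fun s => c2 (iota (fst z, snd z + s))) 0)
      (Derive (fun s => c3 (iota (fst z, snd z + s))) 0).

Definition horo_isometry (l : R4) (iota : C -> R4) : Prop :=
  (forall i k, Ck2 k (fun z => comp4 i (iota z))) /\
  (forall z, horosphere l (iota z)) /\
  (forall z w, iota z = iota w -> z = w) /\
  (forall x, horosphere l x -> exists z, iota z = x) /\
  (forall z, mink (dre iota z) (dre iota z) = 1 /\
             mink (dim iota z) (dim iota z) = 1 /\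
             mink (dre iota z) (dim iota z) = 0).

(* Main.v *)
Require Import Defs.
From Stdlib Require Import Reals Lra Lia.
From Coquelicot Require Import Coquelicot.
Open Scope R_scope.


Lemma cont_eps (g : R3 -> R) (P1 P2 P3 : R) :
  continuous g (P1, P2, P3) -> forall eps, 0 < eps -> exists del, 0 < del /\
  forall q1 q2 q3, Rabs (q1 - P1) < del -> Rabs (q2 - P2) < del -> Rabs (q3 - P3) < del ->
  Rabs (g (q1, q2, q3) - g (P1, P2, P3)) < eps.
Proof.
  intros Hc eps He.
  assert (H := Hc _ (locally_ball (g (P1,P2,P3)) (mkposreal eps He))).
  destruct H as [del Hd]. exists (pos del). split. apply cond_pos.
  intros q1 q2 q3 h1 h2 h3. apply (Hd (q1,q2,q3)). split; [split|]; assumption.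
Qed.

Lemma mvt_step (h dh : R -> R) a b : (forall c, is_derive h c (dh c)) ->
  exists c, Rabs (c - a) <= Rabs (b - a) /\ h b - h a = dh c * (b - a).
Proof.
  intros H. destruct (MVT_cor4 h dh a (Rabs (b - a)) (fun c _ => H c) b (Rle_refl _)) as [c [H1 H2]].
  exists c; split; auto.
Qed.


Section Chain.
Variable f : R3 -> R.
Hypothesis Hd : forall i p, (i < 3)%nat -> ex_derive (fun s => f (add3 p (scal3 s (e3 i)))) 0.



Lemma pd_gen i (g : R -> R) x0 p :
  (i < 3)%nat -> (forall h, g (x0 + h) = f (add3 p (scal3 h (e3 i)))) ->
  is_derive g x0 (partial3 i f p).
Proof.
  intros Hi Heq. assert (H := Derive_correct _ _ (Hd i p Hi)).
  rewrite is_derive_Reals in H |- *. unfold partial3.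
  intros eps He; destruct (H eps He) as [del Hdel]; exists del; intros hh Hh0 Hh.
  specialize (Hdel hh Hh0 Hh). replace (g x0) with (g (x0 + 0)) by (f_equal; ring). rewrite !Heq.
  rewrite Rplus_0_l in Hdel. exact Hdel.
Qed.

Lemma pd0 x y z : is_derive (fun x => f (x, y, z)) x (partial3 0 f (x, y, z)).
Proof. apply pd_gen; auto. intros h; simpl; f_equal; f_equal; [f_equal|]; ring. Qed.
Lemma pd1 x y z : is_derive (fun y => f (x, y, z)) y (partial3 1 f (x, y, z)).
Proof. apply pd_gen; auto. intros h; simpl; f_equal; f_equal; [f_equal|]; ring. Qed.
Lemma pd2 x y z : is_derive (fun z => f (x, y, z)) z (partial3 2 f (x, y, z)).
Proof. apply pd_gen; auto. intros h; simpl; f_equal; f_equal; [f_equal|]; ring. Qed.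
End Chain.


Lemma prod_close A D q d eta : Rabs (A - D) < eta -> Rabs (q - d) < eta -> eta <= 1 ->
  Rabs (A * q - D * d) <= eta * (Rabs d + 1 + Rabs D).
Proof.
  intros H1 H2 H3.
  replace (A*q - D*d) with ((A-D)*q + D*(q-d)) by ring.
  eapply Rle_trans. apply Rabs_triang. rewrite !Rabs_mult.
  assert (Hq := Rabs_triang_inv q d).
  pose proof (Rabs_pos (A-D)). pose proof (Rabs_pos q). pose proof (Rabs_pos D). pose proof (Rabs_pos (q-d)).
  nra.
Qed.

Section Chain.
Variable f : R3 -> R.
Hypothesis Hd : forall i p, (i < 3)%nat -> ex_derive (fun s => f (add3 p (scal3 s (e3 i)))) 0.
Hypothesis Hc : forall i p, (i < 3)%nat -> continuous (partial3 i f) p.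

Lemma chain3 p1 p2 p3 t d1 d2 d3 :
  derivable_pt_lim p1 t d1 -> derivable_pt_lim p2 t d2 -> derivable_pt_lim p3 t d3 ->
  derivable_pt_lim (fun t => f (p1 t, p2 t, p3 t)) t
    (partial3 0 f (p1 t, p2 t, p3 t) * d1 + partial3 1 f (p1 t, p2 t, p3 t) * d2
     + partial3 2 f (p1 t, p2 t, p3 t) * d3).
Proof.
  intros H1 H2 H3 eps He.
  set (P1 := p1 t); set (P2 := p2 t); set (P3 := p3 t).
  set (D0 := partial3 0 f (P1, P2, P3)); set (D1 := partial3 1 f (P1, P2, P3));
  set (D2 := partial3 2 f (P1, P2, P3)).
  set (K := 3 + Rabs d1 + Rabs d2 + Rabs d3 + Rabs D0 + Rabs D1 + Rabs D2).
  assert (HK : 0 < K).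
  { unfold K. pose proof (Rabs_pos d1). pose proof (Rabs_pos d2). pose proof (Rabs_pos d3).
    pose proof (Rabs_pos D0). pose proof (Rabs_pos D1). pose proof (Rabs_pos D2). lra. }
  set (eta := Rmin 1 (eps / (2*K))).
  assert (Heta : 0 < eta).
  { unfold eta. apply Rmin_pos. lra. apply Rdiv_lt_0_compat; lra. }
  assert (Heta1 : eta <= 1) by apply Rmin_l.
  assert (Heta2 : eta <= eps / (2*K)) by apply Rmin_r.
  destruct (cont_eps _ _ _ _ (Hc 0 (P1,P2,P3) ltac:(auto)) eta Heta) as [da [Hda Hda']].
  destruct (cont_eps _ _ _ _ (Hc 1 (P1,P2,P3) ltac:(auto)) eta Heta) as [db [Hdb Hdb']].
  destruct (cont_eps _ _ _ _ (Hc 2 (P1,P2,P3) ltac:(auto)) eta Heta) as [dc [Hdc Hdc']].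
  set (d0 := Rmin da (Rmin db dc)).
  assert (Hd0 : 0 < d0) by (unfold d0; repeat apply Rmin_pos; auto).
  assert (Hd0a : d0 <= da) by apply Rmin_l.
  assert (Hd0b : d0 <= db) by (eapply Rle_trans; [apply Rmin_r | apply Rmin_l]).
  assert (Hd0c : d0 <= dc) by (eapply Rle_trans; [apply Rmin_r | apply Rmin_r]).
  destruct (H1 eta Heta) as [e1 He1]. destruct (H2 eta Heta) as [e2 He2].
  destruct (H3 eta Heta) as [e3 He3].
  set (S := Rabs d1 + Rabs d2 + Rabs d3 + 1).
  assert (HS : 0 < S).
  { unfold S. pose proof (Rabs_pos d1). pose proof (Rabs_pos d2). pose proof (Rabs_pos d3). lra. }
  assert (Hdel : 0 < Rmin (Rmin e1 (Rmin e2 e3)) (d0 / S)).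
  { repeat apply Rmin_pos; try apply cond_pos. apply Rdiv_lt_0_compat; lra. }
  exists (mkposreal _ Hdel). intros h Hh0 Hh. simpl in Hh.
  assert (Hh1 : Rabs h < e1) by (eapply Rlt_le_trans; [exact Hh|]; eapply Rle_trans; apply Rmin_l).
  assert (Hh2 : Rabs h < e2) by (eapply Rlt_le_trans; [exact Hh|]; eapply Rle_trans; [apply Rmin_l|];
     eapply Rle_trans; [apply Rmin_r| apply Rmin_l]).
  assert (Hh3 : Rabs h < e3) by (eapply Rlt_le_trans; [exact Hh|]; eapply Rle_trans; [apply Rmin_l|];
     eapply Rle_trans; [apply Rmin_r| apply Rmin_r]).
  assert (Hh4 : Rabs h < d0 / S) by (eapply Rlt_le_trans; [exact Hh| apply Rmin_r]).
  assert (HhS : S * Rabs h < d0).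
  { apply Rmult_lt_compat_l with (r := S) in Hh4; auto. field_simplify in Hh4; lra. }
  specialize (He1 h Hh0 Hh1). specialize (He2 h Hh0 Hh2). specialize (He3 h Hh0 Hh3).
  set (q1 := (p1 (t + h) - p1 t) / h) in *.
  set (q2 := (p2 (t + h) - p2 t) / h) in *.
  set (q3 := (p3 (t + h) - p3 t) / h) in *.
  assert (Hsmall : forall q d p p', q = (p' - p) / h -> Rabs (q - d) < eta ->
            Rabs d + 1 <= S -> Rabs (p' - p) < d0).
  { intros q d p p' Hq Hqd HdS.
    replace (p' - p) with (q * h) by (rewrite Hq; field; auto).
    rewrite Rabs_mult. assert (Hq' := Rabs_triang_inv q d).
    pose proof (Rabs_pos h). pose proof (Rabs_pos q). nra. }
  assert (S1 : Rabs (p1 (t+h) - P1) < d0).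
  { apply (Hsmall q1 d1); auto. unfold S. pose proof (Rabs_pos d2). pose proof (Rabs_pos d3). lra. }
  assert (S2 : Rabs (p2 (t+h) - P2) < d0).
  { apply (Hsmall q2 d2); auto. unfold S. pose proof (Rabs_pos d1). pose proof (Rabs_pos d3). lra. }
  assert (S3 : Rabs (p3 (t+h) - P3) < d0).
  { apply (Hsmall q3 d3); auto. unfold S. pose proof (Rabs_pos d2). pose proof (Rabs_pos d1). lra. }
  destruct (mvt_step (fun x => f (x, p2 (t+h), p3 (t+h)))
     (fun x => partial3 0 f (x, p2 (t+h), p3 (t+h))) P1 (p1 (t+h))
     (fun c => pd0 f Hd c _ _)) as [c1 [Hc1 E1]].
  destruct (mvt_step (fun y => f (P1, y, p3 (t+h)))
     (fun y => partial3 1 f (P1, y, p3 (t+h))) P2 (p2 (t+h))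
     (fun c => pd1 f Hd _ c _)) as [c2 [Hc2 E2]].
  destruct (mvt_step (fun z => f (P1, P2, z))
     (fun z => partial3 2 f (P1, P2, z)) P3 (p3 (t+h))
     (fun c => pd2 f Hd _ _ c)) as [c3 [Hc3 E3]].
  simpl in E1, E2, E3.
  assert (Z : Rabs (P1 - P1) < d0) by (rewrite Rminus_diag, Rabs_R0; auto).
  assert (Z2 : Rabs (P2 - P2) < d0) by (rewrite Rminus_diag, Rabs_R0; auto).
  assert (A0 : Rabs (partial3 0 f (c1, p2 (t+h), p3 (t+h)) - D0) < eta) by (apply Hda'; lra).
  assert (A1 : Rabs (partial3 1 f (P1, c2, p3 (t+h)) - D1) < eta) by (apply Hdb'; lra).
  assert (A2 : Rabs (partial3 2 f (P1, P2, c3) - D2) < eta) by (apply Hdc'; lra).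
  set (a0 := partial3 0 f (c1, p2 (t+h), p3 (t+h))) in *.
  set (a1 := partial3 1 f (P1, c2, p3 (t+h))) in *.
  set (a2 := partial3 2 f (P1, P2, c3)) in *.
  assert (E : (f (p1 (t+h), p2 (t+h), p3 (t+h)) - f (P1, P2, P3)) / h
              = a0 * q1 + a1 * q2 + a2 * q3).
  { replace (f (p1 (t+h), p2 (t+h), p3 (t+h)) - f (P1, P2, P3)) with
      (a0 * (p1 (t+h) - P1) + a1 * (p2 (t+h) - P2) + a2 * (p3 (t+h) - P3)) by lra.
    unfold q1, q2, q3, P1, P2, P3. field. auto. }
  change (Rabs ((f (p1 (t+h), p2 (t+h), p3 (t+h)) - f (P1, P2, P3)) / h
     - (D0 * d1 + D1 * d2 + D2 * d3)) < eps).
  rewrite E.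
  replace (a0 * q1 + a1 * q2 + a2 * q3 - (D0 * d1 + D1 * d2 + D2 * d3)) with
    ((a0 * q1 - D0 * d1) + (a1 * q2 - D1 * d2) + (a2 * q3 - D2 * d3)) by ring.
  assert (B0 := prod_close _ _ _ _ _ A0 He1 Heta1).
  assert (B1 := prod_close _ _ _ _ _ A1 He2 Heta1).
  assert (B2 := prod_close _ _ _ _ _ A2 He3 Heta1).
  eapply Rle_lt_trans. apply Rabs_triang. 
  eapply Rle_lt_trans. apply Rplus_le_compat_r. apply Rabs_triang.
  assert (eta * K <= eps / 2).
  { apply Rmult_le_compat_r with (r := K) in Heta2; [|lra].
    replace (eps / (2 * K) * K) with (eps / 2) in Heta2 by (field; lra). lra. }
  unfold K in *. lra.
Qed.
End Chain.


Lemma dl_plus f g x l1 l2 : derivable_pt_lim f x l1 -> derivable_pt_lim g x l2 ->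
  derivable_pt_lim (fun y => f y + g y) x (l1 + l2).
Proof. intros; exact (derivable_pt_lim_plus f g x l1 l2 H H0). Qed.
Lemma dl_mult f g x l1 l2 : derivable_pt_lim f x l1 -> derivable_pt_lim g x l2 ->
  derivable_pt_lim (fun y => f y * g y) x (l1 * g x + f x * l2).
Proof. intros; exact (derivable_pt_lim_mult f g x l1 l2 H H0). Qed.
Lemma dl_const c x : derivable_pt_lim (fun _ => c) x 0.
Proof. apply derivable_pt_lim_const. Qed.
Lemma dl_id x : derivable_pt_lim (fun y => y) x 1.
Proof. apply derivable_pt_lim_id. Qed.
Lemma dl_eq f x l l' : derivable_pt_lim f x l -> l = l' -> derivable_pt_lim f x l'.
Proof. intros H <-; auto. Qed.

Lemma c_plus {U : UniformSpace} (f g : U -> R) x : continuous f x -> continuous g x ->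
  continuous (fun y => f y + g y) x.
Proof. intros; apply (continuous_plus f g); auto. Qed.
Lemma c_mult {U : UniformSpace} (f g : U -> R) x : continuous f x -> continuous g x ->
  continuous (fun y => f y * g y) x.
Proof. intros; apply (continuous_mult f g); auto. Qed.
Lemma c_pair {U V W : UniformSpace} (f : U -> V) (g : U -> W) x :
  continuous f x -> continuous g x -> continuous (fun y => (f y, g y)) x.
Proof.
  intros H1 H2. apply (continuous_comp_2 f g (fun a b => (a, b))); auto.
  eapply continuous_ext. 2: apply continuous_id. intros [p q]; reflexivity.
Qed.
Lemma c_comp3 {U : UniformSpace} (F : R3 -> R) (p1 p2 p3 : U -> R) x :
  (forall q, continuous F q) -> continuous p1 x -> continuous p2 x -> continuous p3 x ->
  continuous (fun y => F (p1 y, p2 y, p3 y)) x.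
Proof.
  intros HF H1 H2 H3.
  apply (continuous_comp (fun y => (p1 y, p2 y, p3 y)) F).
  apply c_pair; auto. apply c_pair; auto. apply HF.
Qed.
Lemma c_compT {U : UniformSpace} (h : R -> R) (T : U -> R) x :
  (forall t, continuous h t) -> continuous T x -> continuous (fun y => h (T y)) x.
Proof. intros. apply (continuous_comp T h); auto. Qed.
Lemma dl_cont h t l : derivable_pt_lim h t l -> continuous h t.
Proof. intros H. apply continuity_pt_filterlim. apply derivable_continuous_pt. exists l; exact H. Qed.

Section Main.
Variable a : oneform.
Hypothesis HAc : forall j p, (j < 3)%nat -> continuous (ofcomp a j) p.
Hypothesis HAd : forall j i p, (j < 3)%nat -> (i < 3)%nat ->
  ex_derive (fun s => ofcomp a j (add3 p (scal3 s (e3 i)))) 0.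
Hypothesis HAp : forall j i p, (j < 3)%nat -> (i < 3)%nat -> continuous (partial3 i (ofcomp a j)) p.
Hypothesis HAcl : forall i j p, (i < 3)%nat -> (j < 3)%nat ->
  partial3 i (ofcomp a j) p = partial3 j (ofcomp a i) p.
Variables ga1 ga2 ga3 g1 g2 g3 : R -> R.
Variables b1 b2 b3 : R.
Hypothesis Hga1 : forall t, derivable_pt_lim ga1 t (g1 t).
Hypothesis Hga2 : forall t, derivable_pt_lim ga2 t (g2 t).
Hypothesis Hga3 : forall t, derivable_pt_lim ga3 t (g3 t).
Hypothesis Hg1 : forall t, continuous g1 t.
Hypothesis Hg2 : forall t, continuous g2 t.
Hypothesis Hg3 : forall t, continuous g3 t.

Definition Pt s t : R3 := (b1 + s * (ga1 t + -1 * b1), b2 + s * (ga2 t + -1 * b2), b3 + s * (ga3 t + -1 * b3)).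
Definition integ t s := dot3 (ofval a (Pt s t)) (ga1 t + -1 * b1, ga2 t + -1 * b2, ga3 t + -1 * b3).
Definition dA j s t := partial3 0 (ofcomp a j) (Pt s t) * (s * g1 t)
  + partial3 1 (ofcomp a j) (Pt s t) * (s * g2 t) + partial3 2 (ofcomp a j) (Pt s t) * (s * g3 t).
Definition Gt t s :=
  (dA 0 s t * (ga1 t + -1 * b1) + ofcomp a 0 (Pt s t) * g1 t)
  + (dA 1 s t * (ga2 t + -1 * b2) + ofcomp a 1 (Pt s t) * g2 t)
  + (dA 2 s t * (ga3 t + -1 * b3) + ofcomp a 2 (Pt s t) * g3 t).
Definition Hs t s := s * (ofcomp a 0 (Pt s t) * g1 t + ofcomp a 1 (Pt s t) * g2 t + ofcomp a 2 (Pt s t) * g3 t).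

Lemma integ_eq t s : integ t s = ofcomp a 0 (Pt s t) * (ga1 t + -1 * b1)
  + ofcomp a 1 (Pt s t) * (ga2 t + -1 * b2) + ofcomp a 2 (Pt s t) * (ga3 t + -1 * b3).
Proof. reflexivity. Qed.

Lemma chainA j p1 p2 p3 t d1 d2 d3 : (j < 3)%nat ->
  derivable_pt_lim p1 t d1 -> derivable_pt_lim p2 t d2 -> derivable_pt_lim p3 t d3 ->
  derivable_pt_lim (fun t => ofcomp a j (p1 t, p2 t, p3 t)) t
    (partial3 0 (ofcomp a j) (p1 t, p2 t, p3 t) * d1 + partial3 1 (ofcomp a j) (p1 t, p2 t, p3 t) * d2
     + partial3 2 (ofcomp a j) (p1 t, p2 t, p3 t) * d3).
Proof. intros Hj; apply chain3; intros; auto. Qed.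

Lemma dPt (bb s : R) (ga g : R -> R) t : derivable_pt_lim ga t (g t) ->
  derivable_pt_lim (fun t => bb + s * (ga t + -1 * bb)) t (s * g t).
Proof.
  intros H. eapply dl_eq. apply dl_plus. apply dl_const. apply dl_mult. apply dl_const.
  apply dl_plus. apply H. apply dl_const. cbv beta; ring.
Qed.

Lemma dPs (bb s w : R) : derivable_pt_lim (fun s => bb + s * w) s w.
Proof.
  eapply dl_eq. apply dl_plus. apply dl_const. apply dl_mult. apply dl_id. apply dl_const. cbv beta; ring.
Qed.

Lemma integ_deriv t s : derivable_pt_lim (fun t => integ t s) t (Gt t s).
Proof.
  eapply dl_eq.
  { unfold integ, Pt, ofval, dot3.
    apply dl_plus; [apply dl_plus|];
    (apply dl_mult; [apply chainA; [lia| apply dPt; auto ..] | apply dl_plus; [auto | apply dl_const]]). }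
  cbv beta; unfold Gt, dA, Pt. ring.
Qed.

Lemma Hs_deriv t s : derivable_pt_lim (fun s => Hs t s) s (Gt t s).
Proof.
  eapply dl_eq.
  { unfold Hs, Pt. apply dl_mult. apply dl_id.
    apply dl_plus; [apply dl_plus|];
    (apply dl_mult; [apply chainA; [lia| apply dPs ..] | apply dl_const]). }
  cbv beta. unfold Gt, dA, Pt.
  rewrite (HAcl 1 0), (HAcl 2 0), (HAcl 2 1); try lia.
  ring.
Qed.

Ltac ctac := repeat match goal with
  | |- continuous (fun y => Rplus _ _) _ => apply c_plus
  | |- continuous (fun y => Rmult _ _) _ => apply c_mult
  | |- continuous (fun y => ofcomp a _ _) _ => apply c_comp3; [intros; apply HAc; lia|..]
  | |- continuous (fun y => partial3 _ _ _) _ => apply c_comp3; [intros; apply HAp; lia|..]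
  | |- continuous (fun y => ga1 _) _ => apply (c_compT ga1); [intros; eapply dl_cont; apply Hga1 |]
  | |- continuous (fun y => ga2 _) _ => apply (c_compT ga2); [intros; eapply dl_cont; apply Hga2 |]
  | |- continuous (fun y => ga3 _) _ => apply (c_compT ga3); [intros; eapply dl_cont; apply Hga3 |]
  | |- continuous (fun y => g1 _) _ => apply (c_compT g1); [intros; apply Hg1 |]
  | |- continuous (fun y => g2 _) _ => apply (c_compT g2); [intros; apply Hg2 |]
  | |- continuous (fun y => g3 _) _ => apply (c_compT g3); [intros; apply Hg3 |]
  | |- continuous _ _ => first [apply continuous_const | apply continuous_id | assumption]
  end.

Lemma cGt {U : UniformSpace} (T S : U -> R) x : continuous T x -> continuous S x ->
  continuous (fun y => Gt (T y) (S y)) x.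
Proof. intros HT HS. unfold Gt, dA, Pt. ctac. Qed.

Lemma cInteg {U : UniformSpace} (T S : U -> R) x : continuous T x -> continuous S x ->
  continuous (fun y => integ (T y) (S y)) x.
Proof. intros HT HS. unfold integ, Pt, ofval, dot3. ctac. Qed.

Lemma deriv_W t : is_derive (fun t => RInt (fun s => integ t s) 0 1) t
  (ofcomp a 0 (ga1 t, ga2 t, ga3 t) * g1 t + ofcomp a 1 (ga1 t, ga2 t, ga3 t) * g2 t
   + ofcomp a 2 (ga1 t, ga2 t, ga3 t) * g3 t).
Proof.
  assert (Hder : forall t s, is_derive (fun t => integ t s) t (Gt t s)).
  { intros; apply is_derive_Reals; apply integ_deriv. }
  assert (HD : forall t s, Derive (fun u => integ u s) t = Gt t s).
  { intros; apply is_derive_unique; auto. }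
  replace (ofcomp a 0 (ga1 t, ga2 t, ga3 t) * g1 t + ofcomp a 1 (ga1 t, ga2 t, ga3 t) * g2 t
   + ofcomp a 2 (ga1 t, ga2 t, ga3 t) * g3 t) with (RInt (fun s => Derive (fun u => integ u s) t) 0 1).
  apply is_derive_RInt_param.
  - exists (mkposreal 1 Rlt_0_1); intros y _ s _. eexists; apply Hder.
  - intros s _. apply continuity_2d_pt_filterlim.
    eapply filterlim_ext. intros z; symmetry; apply HD. rewrite HD.
    apply (cGt fst snd (t, s)); [apply continuous_fst | apply continuous_snd].
  - exists (mkposreal 1 Rlt_0_1); intros y _. apply (ex_RInt_continuous (V:=R_CompleteNormedModule)). intros z _.
    apply (cInteg (fun _ => y) (fun s => s)); [apply continuous_const | apply continuous_id].
  - rewrite (RInt_ext _ (Gt t)) by (intros; apply HD).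
    assert (HI : is_RInt (Gt t) 0 1 (minus (Hs t 1) (Hs t 0))).
    { apply (is_RInt_derive (V:=R_CompleteNormedModule) (Hs t)).
      - intros x _. apply is_derive_Reals. apply Hs_deriv.
      - intros x _. apply (cGt (fun _ => t) (fun s => s)); [apply continuous_const | apply continuous_id]. }
    rewrite (is_RInt_unique _ _ _ _ HI).
    unfold minus, plus, opp; simpl. unfold Hs, Pt.
    replace (b1 + 1 * (ga1 t + -1 * b1)) with (ga1 t) by ring.
    replace (b2 + 1 * (ga2 t + -1 * b2)) with (ga2 t) by ring.
    replace (b3 + 1 * (ga3 t + -1 * b3)) with (ga3 t) by ring.
    ring.
Qed.
Lemma cE t : continuous (fun t => ofcomp a 0 (ga1 t, ga2 t, ga3 t) * g1 t + ofcomp a 1 (ga1 t, ga2 t, ga3 t) * g2 t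
   + ofcomp a 2 (ga1 t, ga2 t, ga3 t) * g3 t) t.
Proof. ctac.
  all: first [eapply dl_cont; apply Hga1 | eapply dl_cont; apply Hga2 | eapply dl_cont; apply Hga3 | apply Hg1 | apply Hg2 | apply Hg3].
Qed.
End Main.


Lemma cosh_plus' t d : cosh (t + d) = cosh t * cosh d + sinh t * sinh d.
Proof. unfold cosh, sinh. rewrite Ropp_plus_distr, !exp_plus. field. Qed.
Lemma sinh_plus' t d : sinh (t + d) = sinh t * cosh d + cosh t * sinh d.
Proof. unfold cosh, sinh. rewrite Ropp_plus_distr, !exp_plus. field. Qed.

Lemma geoflow_comp t d u : geoflow t (geoflow d u) = geoflow (t + d) u.
Proof.
  destruct u as [[x0 x1 x2 x3] [v0 v1 v2 v3]]. unfold geoflow, add4, scal4; simpl.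
  rewrite cosh_plus', sinh_plus'. f_equal; f_equal; ring.
Qed.

Lemma geoflow0 u : proj (geoflow 0 u) = proj u.
Proof.
  destruct u as [[x0 x1 x2 x3] [v0 v1 v2 v3]]. unfold proj, geoflow, add4, scal4; simpl.
  rewrite cosh_0, sinh_0. f_equal; ring.
Qed.

Lemma dgeo (X Y : R) t : derivable_pt_lim (fun t => cosh t * X + sinh t * Y) t (sinh t * X + cosh t * Y).
Proof.
  eapply dl_eq. apply dl_plus; apply dl_mult; try apply dl_const.
  apply derivable_pt_lim_cosh. apply derivable_pt_lim_sinh. cbv beta; ring.
Qed.
Lemma dgeo' (X Y : R) t : derivable_pt_lim (fun t => sinh t * X + cosh t * Y) t (cosh t * X + sinh t * Y).
Proof.
  eapply dl_eq. apply dl_plus; apply dl_mult; try apply dl_const.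
  apply derivable_pt_lim_sinh. apply derivable_pt_lim_cosh. cbv beta; ring.
Qed.

Theorem lemma9p3
  (a : oneform) (Ha : closed_oneform a)
  (b : R4) (Hb : inH3 b)
  (lD : R4) (HlD : future_null lD) (iotaD : C -> R4) (HiD : horo_isometry lD iotaD)
  (d : R)
  (lE : R4) (HlE : future_null lE)
  (HE : forall u, (exists u0, ideal_view lD u0 /\ u = geoflow d u0) <-> ideal_view lE u)
  (iotaE : C -> R4) (HiE : horo_isometry lE iotaE)
  (Hid : forall z : C,
      geoflow d (horo_normal lD (iotaD z)) =
      horo_normal lE (iotaE (Cmult (RtoC (exp d)) z))) :
  forall (Rr : R) (z : C), 0 < Rr ->
    cohom_fractal a b (Rr + d) (horo_normal lD (iotaD z)) =
    cohom_fractal a b Rr (horo_normal lE (iotaE (Cmult (RtoC (exp d)) z))).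
Proof.
  intros Rr z HR. rewrite <- Hid.
  generalize (horo_normal lD (iotaD z)). intros u.
  destruct Ha as [Hsm Hcl].
  assert (HAc : forall j p, (j < 3)%nat -> continuous (ofcomp a j) p).
  { intros j p Hj. destruct (Hsm j Hj 1%nat) as [H1 _]. apply H1. }
  assert (HAd : forall j i p, (j < 3)%nat -> (i < 3)%nat ->
    ex_derive (fun s => ofcomp a j (add3 p (scal3 s (e3 i)))) 0).
  { intros j i p Hj Hi. destruct (Hsm j Hj 1%nat) as [_ H2]. apply (H2 i Hi). }
  assert (HAp : forall j i p, (j < 3)%nat -> (i < 3)%nat -> continuous (partial3 i (ofcomp a j)) p).
  { intros j i p Hj Hi. destruct (Hsm j Hj 1%nat) as [_ H2]. apply (H2 i Hi). }
  assert (HAcl : forall i j p, (i < 3)%nat -> (j < 3)%nat ->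
    partial3 i (ofcomp a j) p = partial3 j (ofcomp a i) p).
  { intros; apply Hcl; auto. }
  set (x := fst u). set (v := snd u).
  assert (Hga1 : forall t, derivable_pt_lim (fun t => Defs.c1 (fst (geoflow t u))) t (Defs.c1 (snd (geoflow t u)))).
  { intros t. apply (dgeo (Defs.c1 x) (Defs.c1 v)). }
  assert (Hga2 : forall t, derivable_pt_lim (fun t => Defs.c2 (fst (geoflow t u))) t (Defs.c2 (snd (geoflow t u)))).
  { intros t. apply (dgeo (Defs.c2 x) (Defs.c2 v)). }
  assert (Hga3 : forall t, derivable_pt_lim (fun t => Defs.c3 (fst (geoflow t u))) t (Defs.c3 (snd (geoflow t u)))).
  { intros t. apply (dgeo (Defs.c3 x) (Defs.c3 v)). }
  assert (Hg1 : forall t : R, continuous (fun t => Defs.c1 (snd (geoflow t u))) t).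
  { intros t. eapply dl_cont. apply (dgeo' (Defs.c1 x) (Defs.c1 v)). }
  assert (Hg2 : forall t : R, continuous (fun t => Defs.c2 (snd (geoflow t u))) t).
  { intros t. eapply dl_cont. apply (dgeo' (Defs.c2 x) (Defs.c2 v)). }
  assert (Hg3 : forall t : R, continuous (fun t => Defs.c3 (snd (geoflow t u))) t).
  { intros t. eapply dl_cont. apply (dgeo' (Defs.c3 x) (Defs.c3 v)). }
  set (e := fun t => eval_form a (geoflow t u)).
  set (F := fun t => path_int a b (proj (geoflow t u))).
  assert (Hder : forall t, is_derive F t (e t)).
  { intros t. exact (deriv_W a HAc HAd HAp HAcl _ _ _ _ _ _ (Defs.c1 b) (Defs.c2 b) (Defs.c3 b)
      Hga1 Hga2 Hga3 Hg1 Hg2 Hg3 t). }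
  assert (Hce : forall t, continuous e t).
  { intros t. exact (cE a HAc _ _ _ _ _ _ Hga1 Hga2 Hga3 Hg1 Hg2 Hg3 t). }
  assert (Hex : forall p q, ex_RInt e p q).
  { intros p q. apply (ex_RInt_continuous (V:=R_CompleteNormedModule)). intros; apply Hce. }
  assert (HI : is_RInt e 0 d (minus (F d) (F 0))).
  { apply (is_RInt_derive (V:=R_CompleteNormedModule) F e); intros; auto. }
  assert (HF0 : F 0 = path_int a b (proj u)).
  { unfold F. rewrite geoflow0. reflexivity. }
  unfold cohom_fractal.
  rewrite (RInt_ext (fun t => eval_form a (geoflow t (geoflow d u))) (fun t => e (t + d)))
    by (intros; unfold e; rewrite geoflow_comp; reflexivity).
  assert (Hcomp := RInt_comp_lin (V:=R_CompleteNormedModule) e 1 d 0 Rr (Hex _ _)).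
  replace (1 * 0 + d) with d in Hcomp by ring.
  replace (1 * Rr + d) with (Rr + d) in Hcomp by ring.
  rewrite (RInt_ext (fun y => scal 1 (e (1 * y + d))) (fun t => e (t + d))) in Hcomp
    by (intros; repeat rewrite Rmult_1_l; reflexivity).
  rewrite Hcomp.
  change (RInt (fun t : R => eval_form a (geoflow t u)) 0 (Rr + d)) with (RInt e 0 (Rr + d)).
  rewrite <- (RInt_Chasles e 0 d (Rr + d)) by apply Hex.
  rewrite (is_RInt_unique _ _ _ _ HI).
  change (path_int a b (proj (geoflow d u))) with (F d).
  rewrite <- HF0.
  unfold plus, minus, opp; simpl. change (plus (F d) (- F 0)) with (F d + - F 0). ring.
Qed.
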